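(* Let $G=(V,E)$ be a connected, unweighted graph with $n$ vertices. Let $e$ be a cut edge of $G$, and let $S$ and $T$ (with $S\cup T=V$) be the vertex sets of the two connected components of $G\setminus\{e\}$. Then $$ B_e^{2}=\frac{|S||T|}{n}=\Theta(S)^{-1}. $$
   Context: A cut edge of a connected graph $G$ is an edge $e$ such that $G\setminus\{e\}$ is disconnected. For an unweighted graph, $L=D-A$ is the graph Laplacian, $L^{+}$ its Moore–Penrose pseudoinverse, $L^{2+}=(L^+)^2$, and $1_v$ the indicator vector of vertex $v$. The biharmonic distance is $B_{st}=\sqrt{(1_s-1_t)^{T}L^{2+}(1_s-1_t)}$ and $B_e:=B_{st}$ for $e=\{s,t\}$. For a nonempty proper subset $S\subset V$, $E(S,V\setminus S)$ is the set of edges with one endpoint in $S$ and one in $V\setminus S$, and the isoperimetric ratio is $\Theta(S)=\frac{n|E(S,V\setminus S)|}{|S||V\setminus S|}$. *)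

(* Defs.v *)
From mathcomp Require Import all_boot all_order all_algebra.
Set Implicit Arguments. Unset Strict Implicit. Unset Printing Implicit Defensive.
Import Order.TTheory GRing.Theory Num.Theory.
Local Open Scope ring_scope.

Definition simple_graph n (adj : rel 'I_n) :=
  symmetric adj /\ irreflexive adj.

Definition connected_graph n (adj : rel 'I_n) :=
  forall x y : 'I_n, connect adj x y.

Definition del_edge n (adj : rel 'I_n) (s t : 'I_n) : rel 'I_n :=
  fun x y => adj x y && ~~ (((x == s) && (y == t)) || ((x == t) && (y == s))).

Definition cut_edge n (adj : rel 'I_n) (s t : 'I_n) :=
  adj s t /\ ~ connected_graph (del_edge adj s t).

Definition component n (adj : rel 'I_n) (v : 'I_n) : {set 'I_n} :=
  [set x | connect adj v x].

Definition adjmx (R : pzRingType) n (adj : rel 'I_n) : 'M[R]_n :=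
  \matrix_(i, j) (adj i j)%:R.
Definition degmx (R : pzRingType) n (adj : rel 'I_n) : 'M[R]_n :=
  \matrix_(i, j) ((i == j)%:R * (#|[set k | adj i k]|)%:R).
Definition laplacian (R : pzRingType) n (adj : rel 'I_n) : 'M[R]_n :=
  degmx R adj - adjmx R adj.

(* X is the Moore--Penrose pseudoinverse of the real matrix A
   (the four Penrose conditions; for real matrices A^* = A^T). *)
Definition moore_penrose (R : pzRingType) n (A X : 'M[R]_n) :=
  [/\ A *m X *m A = A, X *m A *m X = X,
      (A *m X)^T = A *m X & (X *m A)^T = X *m A].

Definition indic (R : pzRingType) n (v : 'I_n) : 'cV[R]_n :=
  \col_i (i == v)%:R.

(* Biharmonic distance B_st = sqrt((1_s-1_t)^T (L^+)^2 (1_s-1_t)),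
   given Lp = L^+. *)
Definition biharmonic (R : rcfType) n (Lp : 'M[R]_n) (s t : 'I_n) : R :=
  Num.sqrt ((((indic R s - indic R t)^T *m (Lp *m Lp)) *m
             (indic R s - indic R t)) 0 0).

(* |E(S, V\S)|: each undirected edge counted once (ordered pairs with
   first endpoint in S and second outside S). *)
Definition cut_size n (adj : rel 'I_n) (S : {set 'I_n}) : nat :=
  #|[set p : 'I_n * 'I_n | [&& adj p.1 p.2, p.1 \in S & p.2 \notin S]]|.

Definition iso_ratio (R : fieldType) n (adj : rel 'I_n) (S : {set 'I_n}) : R :=
  (n%:R * (cut_size adj S)%:R) / ((#|S|)%:R * (#|~: S|)%:R).

(* Main.v *)
Require Import Defs.
From mathcomp Require Import all_boot all_order all_algebra ring.
Set Implicit Arguments. Unset Strict Implicit. Unset Printing Implicit Defensive.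
Import Order.TTheory GRing.Theory Num.Theory.
Local Open Scope ring_scope.

Section Graph.
Variables (n : nat) (adj : rel 'I_n) (s t : 'I_n).
Hypothesis sym : symmetric adj.
Hypothesis conn : connected_graph adj.
Hypothesis cut : cut_edge adj s t.

Let G' := del_edge adj s t.

Lemma G'sym : symmetric G'.
Proof.
move=> x y; rewrite /G' /del_edge sym [(y == s) && _]andbC [(y == t) && _]andbC.
by rewrite orbC.
Qed.

Lemma G'csym : connect_sym G'.
Proof. exact: sym_connect_sym G'sym. Qed.

Lemma adj_or_edge x y : adj x y -> G' x y \/ ((x == s) && (y == t) || (x == t) && (y == s)).
Proof.
rewrite /G' /del_edge => ->.
by case: (_ || _); [right|left].
Qed.

Lemma t_notin : ~~ connect G' s t.
Proof.
apply/negP => Hst; case: cut => _; apply => x y.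
apply: connect_sub (conn x y) => u v /adj_or_edge [/connect1 //|].
case/orP => /andP [/eqP -> /eqP ->] //.
by rewrite G'csym.
Qed.

Lemma cross i j : adj i j -> connect G' s i -> ~~ connect G' s j -> i = s /\ j = t.
Proof.
move=> /adj_or_edge [H|E] Hi Hj.
  by rewrite (connect_trans Hi (connect1 H)) in Hj.
case/orP: E => /andP [/eqP Ei /eqP Ej]; first by [].
by rewrite Ej connect0 in Hj.
Qed.

Lemma cover x : connect G' s x || connect G' t x.
Proof.
have cl : closed adj [pred y | connect G' s y || connect G' t y].
  apply: intro_closed; first exact: sym_connect_sym.
  move=> u v /adj_or_edge [H|E].
    move=> /orP [] Hu; apply/orP; [left|right];
      exact: connect_trans Hu (connect1 H).
  by case/orP: E => /andP [_ /eqP ->]; rewrite !inE connect0 ?orbT.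
have := @closed_connect _ adj _ cl _ _ (conn s x).
by rewrite !inE connect0 /= => <-.
Qed.

Lemma T_eq : component G' t = ~: component G' s.
Proof.
apply/setP => x; rewrite !inE.
have := cover x; case Hs: (connect G' s x) => /= Ht; first last.
  by rewrite Ht.
apply/negP => Htx; move: t_notin; rewrite (connect_trans Hs _) //.
by rewrite G'csym.
Qed.

End Graph.

Lemma deg_sum (R : pzRingType) n (adj : rel 'I_n) i :
  (#|[set k | adj i k]|)%:R = \sum_j (adj i j)%:R :> R.
Proof.
rewrite -sum1_card natr_sum big_mkcond /=; apply: eq_bigr => j _.
by rewrite inE; case: (adj i j).
Qed.

Lemma lap_mul (R : comPzRingType) n (adj : rel 'I_n) (v : 'cV[R]_n) i :
  (laplacian R adj *m v) i 0 = \sum_j (adj i j)%:R * (v i 0 - v j 0).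
Proof.
rewrite !mxE.
under eq_bigr => j _ do rewrite !mxE mulrBl.
rewrite sumrB.
under [X in X - _ = _]eq_bigr => j _ do rewrite -mulrA.
rewrite (bigD1 i) //= big1 => [|j /negbTE Hj]; last by rewrite eq_sym Hj mul0r.
rewrite eqxx mul1r addr0 deg_sum mulr_suml.
under [RHS]eq_bigr => j _ do rewrite mulrBr.
by rewrite sumrB.
Qed.

Lemma lap_tr (R : pzRingType) n (adj : rel 'I_n) : symmetric adj ->
  (laplacian R adj)^T = laplacian R adj.
Proof.
move=> sym; apply/matrixP => i j; rewrite !mxE sym.
case: (eqVneq i j) => [->|Hij] //.
by rewrite !mul0r.
Qed.

Lemma mp_unique (R : comPzRingType) n (A X Y : 'M[R]_n) :
  moore_penrose A X -> moore_penrose A Y -> X = Y.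
Proof.
move=> [X1 X2 X3 X4] [Y1 Y2 Y3 Y4].
have EX : X = X *m A *m Y.
  transitivity (X *m (A *m X)^T); first by rewrite X3 mulmxA X2.
  transitivity (X *m X^T *m (A *m Y *m A)^T); first by rewrite Y1 trmx_mul mulmxA.
  transitivity (X *m (A *m X)^T *m (A *m Y)^T); first by rewrite !trmx_mul !mulmxA.
  by rewrite X3 Y3 !mulmxA X2.
have EY : Y = X *m A *m Y.
  transitivity ((Y *m A)^T *m Y); first by rewrite Y4 Y2.
  transitivity ((A *m X *m A)^T *m Y^T *m Y); first by rewrite X1 trmx_mul.
  transitivity ((X *m A)^T *m (Y *m A)^T *m Y); first by rewrite !trmx_mul !mulmxA.
  by rewrite X4 Y4 -!mulmxA (mulmxA Y A Y) Y2.
by rewrite EY -EX.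
Qed.

Lemma mp_sym (R : comPzRingType) n (A X : 'M[R]_n) :
  A^T = A -> moore_penrose A X -> X^T = X.
Proof.
move=> AT H; apply: (mp_unique _ H).
case: H => [X1 X2 X3 X4]; split.
- by rewrite -AT -!trmx_mul mulmxA X1.
- by rewrite -AT -!trmx_mul mulmxA X2.
- by rewrite trmx_mul trmxK AT -X4 trmx_mul AT.
- by rewrite trmx_mul trmxK AT -X3 trmx_mul AT.
Qed.

Lemma lap_ker (R : realFieldType) n (adj : rel 'I_n) (k : 'I_n -> R) :
  symmetric adj -> connected_graph adj ->
  (forall i, \sum_j (adj i j)%:R * (k i - k j) = 0) -> forall x y, k x = k y.
Proof.
move=> sym conn Hk.
have H0 : \sum_i \sum_j (adj i j)%:R * (k i - k j)^+2 = 0.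
  have E1 : forall i, \sum_j (adj i j)%:R * (k i - k j)^+2 =
     k i * (\sum_j (adj i j)%:R * (k i - k j)) -
     \sum_j (adj i j)%:R * k j * (k i - k j).
    move=> i; rewrite mulr_sumr -sumrB; apply: eq_bigr => j _; ring.
  under eq_bigr => i _ do rewrite E1 Hk mulr0 add0r.
  rewrite sumrN exchange_big /=.
  under eq_bigr => j _ do (under eq_bigr => i _ do
     rewrite (sym i j) -mulrA (mulrC (k j)) mulrA -opprB mulrN mulNr).
  under eq_bigr => j _ do rewrite sumrN -mulr_suml Hk mul0r oppr0.
  by rewrite big1 // oppr0.
have Hadj : forall i j, adj i j -> k i = k j.
  move=> i j aij.
  have Hi : \sum_j (adj i j)%:R * (k i - k j)^+2 = 0.
    apply: (psumr_eq0P _ H0) => // i' _; apply: sumr_ge0 => j' _.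
    by apply: mulr_ge0; rewrite ?ler0n ?sqr_ge0.
  have : (adj i j)%:R * (k i - k j)^+2 = 0.
    apply: (psumr_eq0P _ Hi) => // j' _.
    by apply: mulr_ge0; rewrite ?ler0n ?sqr_ge0.
  by rewrite aij mul1r => /eqP; rewrite sqrf_eq0 subr_eq0 => /eqP.
move=> x y.
have cl : closed adj [pred z | k z == k x].
  by move=> u v /Hadj; rewrite !inE => ->.
have := @closed_connect _ adj _ cl _ _ (conn x y).
by rewrite !inE eqxx => /esym/eqP.
Qed.

Lemma sum_delta1 (R : pzRingType) n (t : 'I_n) : \sum_j ((j == t)%:R : R) = 1.
Proof.
by rewrite (bigD1 t) //= eqxx big1 ?addr0 // => j /negbTE ->.
Qed.

Lemma sum_inS (R : pzRingType) n (S : {set 'I_n}) : \sum_i ((i \in S)%:R : R) = #|S|%:R.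
Proof.
rewrite -sumr_const [RHS]big_mkcond /=; apply: eq_bigr => i _.
by case: (i \in S).
Qed.

Theorem theorem5p1 (R : rcfType) (n : nat) (adj : rel 'I_n) (s t : 'I_n)
    (Lp : 'M[R]_n) :
  simple_graph adj ->
  connected_graph adj ->
  cut_edge adj s t ->
  moore_penrose (laplacian R adj) Lp ->
  let S := component (del_edge adj s t) s in
  let T := component (del_edge adj s t) t in
  biharmonic Lp s t ^+ 2 = (#|S|)%:R * (#|T|)%:R / n%:R /\
  (#|S|)%:R * (#|T|)%:R / n%:R = (iso_ratio R adj S)^-1.
Proof.
move=> [sym irr] conn cut HMP S T.
have Hs : s \in S by rewrite inE connect0.
have Ht : t \notin S by rewrite inE t_notin.
have HT : T = ~: S by exact: T_eq.
have Hcross : forall i j, adj i j -> i \in S -> j \notin S -> i = s /\ j = t.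
  by move=> i j a; rewrite !inE; apply: cross.
have n0 : (0 < n)%N by apply: leq_ltn_trans (ltn_ord s).
have nR : n%:R != 0 :> R by rewrite pnatr_eq0 -lt0n.
have hcard : (#|S| + #|~: S|)%N = n by rewrite cardsC card_ord.
split; last first.
  rewrite /iso_ratio.
  have -> : cut_size adj S = 1%N.
    rewrite /cut_size -(cards1 (s, t)); congr #|pred_of_set _|; apply/setP => [[i j]].
    rewrite [in LHS]inE [in RHS]inE /=; apply/idP/idP.
      by case/and3P => a iS jS; case: (Hcross i j a iS jS) => -> ->.
    by move/eqP => [-> ->]; rewrite cut.1 Hs Ht.
  by rewrite invf_div HT mulr1.
set L := laplacian R adj.
have Lt : L^T = L by exact: lap_tr.
have Lps : Lp^T = Lp by exact: mp_sym Lt HMP.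
case: HMP => [M1 M2 M3 M4].
have st : s != t by apply: contraNneq Ht => <-.
set b := indic R s - indic R t.
set a := #|S|%:R / n%:R : R.
set x := \col_i ((i \in S)%:R - a) : 'cV[R]_n.
have term : forall i j, (adj i j)%:R * ((i \in S)%:R - (j \in S)%:R) =
    ((i == s) && (j == t))%:R - ((i == t) && (j == s))%:R :> R.
  move=> i j.
  have nt : forall v, v \in S -> (v == t) = false.
    by move=> v vS; apply/negbTE; apply: contraNneq Ht => <-.
  have ns : forall v, v \notin S -> (v == s) = false.
    by move=> v vS; apply/negbTE; apply: contraNneq vS => ->.
  case Aij: (adj i j); last first.
    have h1 : ((i == s) && (j == t)) = false.
      by apply/negbTE; apply: contraFN Aij => /andP[/eqP -> /eqP ->]; exact: cut.1.
    have h2 : ((i == t) && (j == s)) = false.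
      by apply/negbTE; apply: contraFN Aij => /andP[/eqP -> /eqP ->]; rewrite sym; exact: cut.1.
    by rewrite h1 h2 mul0r subrr.
  rewrite mul1r.
  case iS: (i \in S); case jS: (j \in S).
  - by rewrite (nt i iS) (nt j jS) !andbF andFb !subrr.
  - have [-> ->] := Hcross i j Aij iS (negbT jS).
    by rewrite !eqxx (negbTE st).
  - have Aji : adj j i by rewrite sym.
    have [-> ->] := Hcross j i Aji jS (negbT iS).
    by rewrite !eqxx eq_sym (negbTE st).
  - by rewrite (ns i (negbT iS)) (ns j (negbT jS)) !andbF andFb !subrr.
have HLx : L *m x = b.
  apply/matrixP => i j; rewrite (ord1 j) lap_mul !mxE.
  under eq_bigr => k _ do rewrite !mxE opprB addrA subrK term.
  rewrite sumrB.
  by case: (i == s); case: (i == t); rewrite ?sum_delta1 ?big1 // => k _.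
have HLu : L *m (const_mx 1 : 'rV[R]_n)^T = 0.
  apply/matrixP => i j; rewrite (ord1 j) lap_mul !mxE big1 // => k _.
  by rewrite !mxE subrr mulr0.
have HLpu : Lp *m (const_mx 1 : 'rV[R]_n)^T = 0.
  rewrite -{1}M2 -(mulmxA Lp L Lp) -M3 trmx_mul Lps Lt -!mulmxA HLu.
  by rewrite !mulmx0.
set z := Lp *m b.
have sumz : \sum_i z i 0 = 0.
  have := congr1 (fun M : 'cV[R]_n => (M^T *m b) 0 0) HLpu.
  rewrite /= trmx_mul Lps => E.
  transitivity ((((const_mx 1 : 'rV[R]_n)^T)^T *m Lp *m b) 0 0); last first.
    by rewrite E trmx0 mul0mx mxE.
  rewrite trmxK -mulmxA mxE; apply: eq_bigr => i _; by rewrite !mxE mul1r.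
have sumx : \sum_i x i 0 = 0.
  under eq_bigr => i0 _ do rewrite mxE.
  rewrite sumrB sum_inS sumr_const card_ord -[a *+ n]mulr_natr /a.
  by rewrite divfK // subrr.
have zx : z = x.
  set kv := z - x.
  have Lk : L *m kv = 0.
    by rewrite mulmxBr /z -HLx !mulmxA M1 subrr.
  have kc := lap_ker (k := fun i => kv i 0) sym conn.
  have kc' : forall i, kv i 0 = kv s 0.
    move=> i; apply: kc => i'.
    by rewrite -lap_mul Lk mxE.
  have : \sum_i kv i 0 = 0.
    rewrite (eq_bigr (fun i => z i 0 - x i 0)); last by move=> i _; rewrite /kv !mxE.
    by rewrite sumrB sumz sumx subrr.
  under eq_bigr => i _ do rewrite kc'.
  rewrite sumr_const card_ord -[_ *+ n]mulr_natr => /eqP; rewrite mulf_eq0 (negbTE nR) orbF => /eqP k0.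
  apply/matrixP => i j; rewrite (ord1 j); apply/eqP; rewrite -subr_eq0.
  by have := kc' i; rewrite k0 !mxE => ->.
have Eq : (((b^T *m (Lp *m Lp)) *m b) 0 0) = \sum_i x i 0 ^+ 2.
  transitivity ((z^T *m z) 0 0); first by rewrite /z trmx_mul Lps !mulmxA.
  by rewrite zx mxE; apply: eq_bigr => i _; rewrite mxE expr2.
rewrite /biharmonic -/b Eq sqr_sqrtr; last by apply: sumr_ge0 => i _; apply: sqr_ge0.
have sq : forall i : 'I_n, ((i \in S)%:R - a)^+2 = (i \in S)%:R * (1 - 2 * a) + a^+2.
  by move=> i; case: (i \in S) => /=; rewrite ?mulr1n ?mulr0n; ring.
under eq_bigr => i _ do rewrite mxE sq.
rewrite big_split /= -mulr_suml sum_inS sumr_const card_ord HT.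
have hc : (#|~: S|)%:R = n%:R - #|S|%:R :> R by rewrite -[in n%:R]hcard natrD addrC addKr.
rewrite hc /a -mulr_natr.
by field.
Qed.
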